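(* In the flow-sampling problem with $M\ge1$ devices, accuracies $\varphi_i\in(0,1]$ and external sampling probabilities $p_i\in(0,1)$, fix an integer $G\ge1$ and let the largest-order-statistic policy be the policy that in every slot draws $G$ integers independently and uniformly from $\{1,\dots,M\}$ (with replacement, independently of the state and of the past) and samples the device indexed by the largest of them. Its average cost is $$J_{\mathrm{order}}=\sum_{i=1}^{M}\frac{\varphi_i(1-q_i)(1-p_i)}{1-(1-q_i)(1-p_i)},\qquad q_i=\frac{i^G-(i-1)^G}{M^G}.$$ Moreover, if $p_1=\dots=p_M=p\in(0,1)$ and $\varphi_i=\sigma^{M-i}$ with $\sigma\in(0,1)$, then for fixed $G$, $$\lim_{M\to\infty}J_{\mathrm{order}}=\frac{1-p}{(1-\sigma)p}.$$
   Context: Flow-sampling model: a flow path passes through $M$ devices indexed $1,\dots,M$. Time is slotted, $t=0,1,2,\dots$. Each device $i$ has an accuracy $\varphi_i$ and a counter $n_i^t\in\{0,1,2,\dots\}$, with $n_i^0=0$. At the start of each slot $t$ the controller chooses an action $a^t\in\{1,\dots,M\}$ (the device it samples) according to a policy. Independently of everything else, for each $i$ and $t$ an event $H_i^t$ occurs with probability $p_i$, independently across $i$ and $t$. Counter dynamics: if $a^t=i$ then $n_i^{t+1}=0$; if $a^t\ne i$ then $n_i^{t+1}=0$ if $H_i^t$ occurs and $n_i^{t+1}=n_i^t+1$ otherwise. The immediate cost is $C(s^t)=\sum_{i=1}^M\varphi_i n_i^t$ and the average cost of policy $\mu$ is $J_\mu=\lim_{T\to\infty}\mathbb{E}_\mu\left[\frac1T\sum_{t=0}^{T-1}C(s^t)\right]$.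 *)

(* Defs.v *)
From HB Require Import structures.
From mathcomp Require Import all_boot all_order all_algebra.
From mathcomp Require Import all_classical all_reals all_analysis.
Set Implicit Arguments. Unset Strict Implicit. Unset Printing Implicit Defensive.
Import Order.TTheory GRing.Theory Num.Theory.
Import numFieldNormedType.Exports.
Local Open Scope ring_scope.

(* Devices are indexed by i : 'I_M, the ordinal i standing for device (val i).+1.
   Accuracies phi and probabilities p are given as functions nat -> R,
   evaluated at the 1-based device index. *)

(* Randomness of one slot: the G draws (each in 'I_M, ordinal d standing for
   integer d+1 in {1..M}) and the indicators of the events H_i^t. *)
Definition slot (M G : nat) := ({ffun 'I_G -> 'I_M} * {ffun 'I_M -> bool})%type.

Definition act_ord (M G : nat) (w : slot M G) : nat :=
  (\max_(g : 'I_G) val (w.1 g))%N.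

Definition slot_prob (R : realType) (M G : nat) (p : nat -> R) (w : slot M G) : R :=
  (M%:R ^+ G)^-1 *
  \prod_(i : 'I_M) (if w.2 i then p (val i).+1 else 1 - p (val i).+1).

Definition step (M G : nat) (w : slot M G) (n : 'I_M -> nat) : 'I_M -> nat :=
  fun i => if act_ord w == val i then 0%N
           else if w.2 i then 0%N else (n i).+1.

Definition state_of (M G : nat) (ws : seq (slot M G)) : 'I_M -> nat :=
  foldl (fun n w => step w n) (fun _ => 0%N) ws.

Definition cost (R : realType) (M : nat) (phi : nat -> R) (n : 'I_M -> nat) : R :=
  \sum_(i : 'I_M) phi (val i).+1 * (n i)%:R.

(* E[C(s^t)] under the largest-order-statistic policy: s^t is determined by the
   (independent) outcomes of slots 0..t-1. *)
Definition exp_cost (R : realType) (M G : nat) (phi p : nat -> R) (t : nat) : R :=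
  \sum_(w : {ffun 'I_t -> slot M G})
    (\prod_(j : 'I_t) slot_prob p (w j)) *
    cost phi (state_of [seq w j | j <- enum 'I_t]).

Definition avg_cost (R : realType) (M G : nat) (phi p : nat -> R) (T : nat) : R :=
  (T%:R)^-1 * \sum_(t < T) exp_cost M G phi p t.

Definition J_order (R : realType) (M G : nat) (phi p : nat -> R) : R :=
  limn (avg_cost M G phi p).

Definition q_ord (R : realType) (M G i : nat) : R :=
  ((i%:R) ^+ G - ((i.-1)%:R) ^+ G) / (M%:R ^+ G).

(* Main.v *)
Require Import Defs.
From HB Require Import structures.
From mathcomp Require Import all_boot all_order all_algebra.
From mathcomp Require Import all_classical all_reals all_analysis.
From mathcomp Require Import ring lra.
Import Order.TTheory GRing.Theory Num.Theory.
Import numFieldNormedType.Exports.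
Local Open Scope classical_set_scope.
Local Open Scope ring_scope.
Set Implicit Arguments. Unset Strict Implicit. Unset Printing Implicit Defensive.

Section Comb.
Variables (M G : nat).

Definition nrb (x : slot M G) (i : 'I_M) : bool := (act_ord x != val i) && ~~ x.2 i.
Definition tcf (n : nat) (b : bool) : nat := if b then n.+1 else 0%N.

Lemma state_ofE (s : seq (slot M G)) i :
  state_of s i = foldl tcf 0%N [seq nrb x i | x <- s].
Proof.
rewrite /state_of.
suff H : forall n0, foldl (fun n w => step w n) n0 s i = foldl tcf (n0 i) [seq nrb x i | x <- s] by exact: H.
elim: s => [|x s IH] n0 //=.
rewrite IH; congr foldl.
by rewrite /step /tcf /nrb; case: eqP => //=; case: (x.2 i).
Qed.

Lemma tc_formula (b : seq bool) : foldl tcf 0%N b =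
  (\sum_(k < size b) \prod_(size b - k.+1 <= j < size b) nth false b j)%N.
Proof.
elim/last_ind: b => [|b x IH]; first by rewrite big_ord0.
rewrite foldl_rcons IH size_rcons.
have E : forall k : 'I_(size b).+1,
  (\prod_((size b).+1 - k.+1 <= j < (size b).+1) nth false (rcons b x) j =
   (\prod_(size b - k <= j < size b) nth false b j) * x)%N.
  move=> k; rewrite subSS big_nat_recr ?leq_subr //= nth_rcons ltnn eqxx.
  congr (_ * _)%N; apply: eq_big_nat => j /andP[_ hj]; by rewrite nth_rcons hj.
rewrite (eq_bigr _ (fun k _ => E k)) -big_distrl /= big_ord_recl /= subn0.
rewrite big_geq // add1n.
by clear E; case: x; rewrite /tcf ?muln1 ?muln0.
Qed.


Lemma card_ord_lt (m : nat) : (m <= M)%N -> #|[pred j : 'I_M | (j < m)%N]| = m.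
Proof.
move=> hm; rewrite -sum1_card.
rewrite (eq_bigl (fun j : 'I_M => (j < m)%N)) //.
rewrite -(big_mkord (fun j => (j < m)%N) (fun _ => 1%N)).
have := @big_nat_widen _ 0%N addn 0 m M xpredT (fun _ => 1%N) hm; rewrite /= => <-.
by rewrite sum_nat_const_nat subn0 muln1.
Qed.

Definition actf (d : {ffun 'I_G -> 'I_M}) : nat := (\max_(g : 'I_G) val (d g))%N.

Lemma card_act_lt (m : nat) : (0 < G)%N -> (m <= M)%N ->
  #|[pred d : {ffun 'I_G -> 'I_M} | (actf d < m)%N]| = (m ^ G)%N.
Proof.
move=> G0 hm; case: m hm => [|m] hm.
  by rewrite exp0n //; apply: eq_card0 => d.
rewrite -[in RHS](@card_ord_lt m.+1 hm) -[G in RHS]card_ord -card_ffun_on.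
apply: eq_card => d /=; rewrite !inE ltnS.
apply/bigmax_leqP/ffun_onP => H g; first by rewrite inE /= ltnS H.
by have := H g; rewrite inE /= ltnS.
Qed.

End Comb.

Section Real.
Variable R : realType.

Lemma indep (T : finType) t (P : 'I_t -> T -> R) (g : T -> R) (A : pred 'I_t) :
  \sum_(w : {ffun 'I_t -> T}) (\prod_j P j (w j)) * \prod_(j | A j) g (w j)
  = \prod_j (if A j then \sum_x P j x * g x else \sum_x P j x).
Proof.
transitivity (\prod_j \sum_x (P j x * (if A j then g x else 1))); last first.
  by apply: eq_bigr => j _; case: (A j) => //; apply: eq_bigr => x _; rewrite mulr1.
rewrite bigA_distr_bigA; apply: eq_bigr => w _.
rewrite big_split /=; congr (_ * _); by rewrite big_mkcond.
Qed.

Lemma sum_pair (A B : finType) (H : A * B -> R) :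
  \sum_x H x = \sum_a \sum_b H (a, b).
Proof. by rewrite pair_bigA; apply: eq_bigr => -[]. Qed.

Lemma stateR M G t (w : {ffun 'I_t -> slot M G}) i :
  ((state_of [seq w j | j <- enum 'I_t] i)%:R : R) =
  \sum_(k < t) \prod_(j < t | (t - k.+1 <= j)%N) ((nrb (w j) i)%:R : R).
Proof.
rewrite state_ofE tc_formula -map_comp size_map size_enum_ord natr_sum.
apply: eq_bigr => k _; rewrite natr_prod big_geq_mkord.
apply: eq_big => // j _.
by rewrite (nth_map j) ?size_enum_ord // nth_ord_enum.
Qed.


Lemma sum_natb (T : finType) (b : pred T) : \sum_(x : T) ((b x)%:R : R) = (#|b|)%:R.
Proof.
rewrite -sum1_card natr_sum [RHS]big_mkcond /=; apply: eq_bigr => x _.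
by rewrite unfold_in; case: (b x).
Qed.

Section Slot.
Variables (M G : nat) (p : nat -> R).
Hypotheses (HM : (0 < M)%N) (HG : (0 < G)%N).

Definition Ph (h : {ffun 'I_M -> bool}) : R :=
  \prod_(l : 'I_M) (if h l then p l.+1 else 1 - p l.+1).

Lemma sumPh : \sum_h Ph h = 1.
Proof.
have H := @indep bool M (fun l b => if b then p l.+1 else 1 - p l.+1) (fun _ => 1) xpred0.
have H2 : forall w : {ffun 'I_M -> bool},
  (\prod_j (if w j then p j.+1 else 1 - p j.+1)) * \prod_(j : 'I_M | xpred0 j) 1 = Ph w.
  by move=> w; rewrite [X in _ * X]big_pred0 // mulr1.
rewrite (eq_bigr _ (fun w _ => H2 w)) /= in H.
rewrite H; apply: big1 => j _; by rewrite big_bool /= subrKC.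
Qed.

Lemma sumPh_i i : \sum_h Ph h * (~~ h i)%:R = 1 - p i.+1.
Proof.
have H := @indep bool M (fun l b => if b then p l.+1 else 1 - p l.+1)
   (fun b => (~~ b)%:R) (fun j => j == i).
have H2 : forall w : {ffun 'I_M -> bool},
  (\prod_j (if w j then p j.+1 else 1 - p j.+1)) * \prod_(j | j == i) ((~~ w j)%:R : R) = Ph w * (~~ w i)%:R.
  by move=> w; rewrite big_pred1_eq.
rewrite (eq_bigr _ (fun w _ => H2 w)) /= in H.
rewrite H; rewrite (bigD1 i) //= eqxx [X in _ * X]big1; last first.
  by move=> j /negbTE ->; rewrite big_bool /= subrKC.
by rewrite mulr1 big_bool /= mulr0 mulr1 add0r.
Qed.

Lemma sum_slot_prob : \sum_x slot_prob p (x : slot M G) = 1.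
Proof.
rewrite sum_pair.
under eq_bigr do rewrite /slot_prob /= -mulr_sumr sumPh mulr1.
rewrite sumr_const card_ffun !card_ord -[_ *+ (M ^ G)%N]mulr_natr natrX mulVf //.
by rewrite expf_neq0 // pnatr_eq0 -lt0n.
Qed.

Lemma sum_act_neq (i : 'I_M) :
  \sum_(d : {ffun 'I_G -> 'I_M}) ((actf d != val i)%:R : R) =
  M%:R ^+ G - ((i.+1)%:R ^+ G - (val i)%:R ^+ G).
Proof.
have E : forall d : {ffun 'I_G -> 'I_M}, ((actf d != val i)%:R : R) =
   1 - ((actf d < i.+1)%N)%:R + ((actf d < i)%N)%:R.
  move=> d; rewrite (_ : val i = nat_of_ord i) //; case: (ltngtP (actf d) i) => h.
  - by rewrite ltnS (ltnW h) /= subrr add0r.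
  - by rewrite ltnS leqNgt h /= subr0 addr0.
  - by rewrite h ltnSn /= subrr addr0.
rewrite (eq_bigr _ (fun d _ => E d)) big_split /= sumrB.
rewrite !sum_natb !card_act_lt // ?(ltnW (ltn_ord i)) //.
rewrite sumr_const card_ffun !card_ord !natrX.
by ring.
Qed.

Lemma sum_nrb (i : 'I_M) : \sum_x slot_prob p (x : slot M G) * (nrb x i)%:R =
  (1 - q_ord R M G i.+1) * (1 - p i.+1).
Proof.
have natb_and : forall a b : bool, ((a && b)%:R : R) = a%:R * b%:R.
  by case; case; rewrite ?mulr0 ?mulr1 ?mul0r.
rewrite sum_pair.
transitivity (\sum_(d : {ffun 'I_G -> 'I_M}) ((M%:R ^+ G)^-1 * ((actf d != val i)%:R)) *
     (\sum_h Ph h * (~~ h i)%:R)); last first.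
  rewrite -mulr_suml -mulr_sumr sum_act_neq sumPh_i; congr (_ * _).
  rewrite /q_ord /=; field.
  by rewrite expf_neq0 // pnatr_eq0 -lt0n.
apply: eq_bigr => d _; rewrite mulr_sumr; apply: eq_bigr => h _.
rewrite /slot_prob /nrb natb_and /=; rewrite /actf /act_ord /=.
rewrite -/(Ph h); ring.
Qed.

End Slot.

Section Exp.
Variables (M G : nat) (phi p : nat -> R).
Hypotheses (HM : (0 < M)%N) (HG : (0 < G)%N).

Definition aa (i : 'I_M) : R := (1 - q_ord R M G i.+1) * (1 - p i.+1).

Lemma exp_costE t : exp_cost M G phi p t =
  \sum_(i : 'I_M) phi i.+1 * \sum_(k < t) aa i ^+ k.+1.
Proof.
rewrite /exp_cost /cost.
transitivity (\sum_(i : 'I_M) phi i.+1 * \sum_(k < t)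
   \sum_(w : {ffun 'I_t -> slot M G}) (\prod_j slot_prob p (w j)) *
     \prod_(j < t | (t - k.+1 <= j)%N) ((nrb (w j) i)%:R : R)).
  under eq_bigr do rewrite mulr_sumr.
  rewrite exchange_big /=; apply: eq_bigr => i _.
  rewrite [in RHS]exchange_big /= mulr_sumr; apply: eq_bigr => w _.
  by rewrite stateR mulrCA mulr_sumr.
apply: eq_bigr => i _; congr (_ * _); apply: eq_bigr => k _.
rewrite (@indep _ t (fun _ x => slot_prob p x) (fun x => (nrb x i)%:R) (fun j : 'I_t => (t - k.+1 <= j)%N)) (eq_bigr (fun j : 'I_t => if (t - k.+1 <= j)%N then aa i else 1)); last first.
  move=> j _; case: ifP => _; [exact: (sum_nrb p HM HG) | exact: (sum_slot_prob G p HM)].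
rewrite -big_mkcond /=. transitivity (\prod_(t - k.+1 <= j < t) aa i); first by rewrite big_geq_mkord; apply: eq_bigl. rewrite prodr_const_nat.
by rewrite subKn.
Qed.

End Exp.

Lemma cvg_sumr (I : finType) (f : I -> nat -> R) (l : I -> R) :
  (forall i, f i @ \oo --> l i) ->
  (fun n => \sum_i f i n) @ \oo --> \sum_i l i.
Proof.
move=> H; rewrite unlock /=.
elim: (index_enum I) => [|a r IH] /=; first exact: cvg_cst.
exact: cvgD.
Qed.

Section Lim1.
Variables (M G : nat) (phi p : nat -> R).
Hypotheses (HM : (0 < M)%N) (HG : (0 < G)%N).
Hypothesis Hp : forall i : nat, (1 <= i <= M)%N -> 0 < p i < 1.

Lemma q_bounds (i : 'I_M) : 0 <= q_ord R M G i.+1 <= 1.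
Proof.
rewrite /q_ord /= -!natrX -natrB ?leq_exp2r ?leqnSn //.
have MG : (0 < M ^ G)%N by rewrite expn_gt0 HM.
apply/andP; split; first by rewrite divr_ge0.
rewrite ler_pdivrMr ?ltr0n // mul1r ler_nat.
apply: leq_trans (leq_subr _ _) _.
by rewrite leq_exp2r.
Qed.

Lemma aa_bounds (i : 'I_M) : 0 <= aa G p i < 1.
Proof.
have /andP[q0 q1] := q_bounds i.
have /andP[p0 p1] : 0 < p i.+1 < 1 by apply: Hp; rewrite ltn_ord.
rewrite /aa; apply/andP; split; first by rewrite mulr_ge0 // subr_ge0 // ltW.
nra.
Qed.


Lemma part1 : avg_cost M G phi p @ \oo -->
  \sum_(1 <= i < M.+1) phi i * (1 - q_ord R M G i) * (1 - p i)
            / (1 - (1 - q_ord R M G i) * (1 - p i)).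
Proof.
have ecvg : exp_cost M G phi p @ \oo -->
    \sum_(i : 'I_M) phi i.+1 * (aa G p i * (1 - aa G p i)^-1).
  have -> : exp_cost M G phi p = (fun t => \sum_(i : 'I_M) phi i.+1 *
       series (geometric (aa G p i) (aa G p i)) t).
    apply/funext => t; rewrite exp_costE //; apply: eq_bigr => i _.
    congr (_ * _); rewrite /series /= big_mkord; apply: eq_bigr => k _.
    by rewrite exprS.
  apply: cvg_sumr => i; apply: cvgMl_tmp; apply: cvg_geometric_series.
  by have /andP[a0 a1] := aa_bounds i; rewrite ger0_norm.
have -> : \sum_(1 <= i < M.+1) phi i * (1 - q_ord R M G i) * (1 - p i)
            / (1 - (1 - q_ord R M G i) * (1 - p i)) =
    \sum_(i : 'I_M) phi i.+1 * (aa G p i * (1 - aa G p i)^-1).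
  rewrite big_add1 big_mkord; apply: eq_bigr => i _.
  by rewrite /aa !mulrA.
rewrite -cvg_shiftS.
have -> : [sequence avg_cost M G phi p n.+1]_n = arithmetic_mean (exp_cost M G phi p).
  apply/funext => n; rewrite /avg_cost /arithmetic_mean /series /=.
  by rewrite big_mkord.
exact: cesaro.
Qed.

End Lim1.

Lemma key_ineq (p x e : R) : 0 < p < 1 -> 0 <= x <= e -> x <= 1 ->
  (1 - p) / p - e / p ^+ 2 <= (1 - x) * (1 - p) / (1 - (1 - x) * (1 - p))
  <= (1 - p) / p.
Proof.
move=> /andP[p0 p1] /andP[x0 xe] x1.
set D := 1 - (1 - x) * (1 - p).
have Dp : p <= D by rewrite /D; nra.
have D0 : 0 < D by apply: lt_le_trans Dp.
have -> : (1 - x) * (1 - p) / D = (1 - p) / p - x * (1 - p) / (p * D).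
  by rewrite /D; field; rewrite -/D !gt_eqF.
have t0 : 0 <= x * (1 - p) / (p * D).
  by apply: divr_ge0; apply: mulr_ge0 => //; [rewrite subr_ge0 ltW // | exact: ltW | exact: ltW].
apply/andP; split; last by rewrite gerBl.
rewrite lerD2l lerN2 ler_pdivrMr ?mulr_gt0 //.
have -> : e / p ^+ 2 * (p * D) = e * (D / p).
  by field; rewrite gt_eqF.
have Dp1 : 1 <= D / p by rewrite ler_pdivlMr // mul1r.
have e0 : 0 <= e by apply: le_trans xe.
nra.
Qed.

Lemma q_le (M G i : nat) : (0 < G)%N -> (1 <= i <= M)%N ->
  q_ord R M G i <= G%:R / M%:R.
Proof.
move=> G0 /andP[i1 iM].
have M0 : (0 < M)%N by apply: leq_trans iM.
have MR : 0 < (M%:R : R) by rewrite ltr0n.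
rewrite /q_ord subrXX.
have -> : (i%:R - i.-1%:R : R) = 1 by case: i i1 iM => // i _ _; rewrite /= -natrB // subSnn.
rewrite mul1r.
have Hs : \sum_(k < G) i%:R ^+ (G.-1 - k) * i.-1%:R ^+ k <= \sum_(k < G) (M%:R ^+ G.-1 : R).
  apply: ler_sum => k _.
  have -> : (M%:R ^+ G.-1 : R) = M%:R ^+ (G.-1 - k) * M%:R ^+ k.
    by rewrite -exprD subnK // -ltnS prednK.
  apply: ler_pM; rewrite ?exprn_ge0 ?ler0n //; apply: lerXn2r; rewrite ?nnegrE ?ler0n ?ler_nat //.
  by apply: leq_trans (leq_pred _) iM.
rewrite sumr_const card_ord in Hs.
have -> : (M%:R ^+ G : R) = M%:R ^+ G.-1 * M%:R by rewrite -exprSr prednK.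
rewrite ler_pdivrMr ?mulr_gt0 ?exprn_gt0 //.
apply: (le_trans Hs); rewrite -mulr_natr le_eqVlt; apply/orP; left; apply/eqP.
by field; rewrite gt_eqF.
Qed.


Lemma S_closed (s : R) (M : nat) : s != 1 ->
  \sum_(1 <= i < M.+1) s ^+ (M - i) = (1 - s ^+ M) / (1 - s).
Proof.
move=> s1.
transitivity (\sum_(0 <= k < M) s ^+ k).
  rewrite big_rev_mkord subn1 /= big_mkord; apply: eq_bigr => k _; by rewrite subSS subKn // ltnW.
have := congr1 (fun f => f M) (geometric_seriesE 1 s1).
rewrite /series /= mul1r => <-.
by apply: eq_bigr => k _; rewrite mul1r.
Qed.

Section Lim2.
Variables (G : nat) (p s : R).
Hypotheses (HG : (0 < G)%N) (Hp : 0 < p < 1) (Hs : 0 < s < 1).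

Definition Jsum (M : nat) : R := \sum_(1 <= i < M.+1)
   s ^+ (M - i) * (1 - q_ord R M G i) * (1 - p) / (1 - (1 - q_ord R M G i) * (1 - p)).
Definition Ssum (M : nat) : R := \sum_(1 <= i < M.+1) s ^+ (M - i).

Lemma Jbounds (M : nat) : (0 < M)%N ->
  (1 - p) / p * Ssum M - G%:R / M%:R / p ^+ 2 * Ssum M <= Jsum M <= (1 - p) / p * Ssum M.
Proof.
move=> M0; rewrite /Jsum /Ssum -mulrBl !mulr_sumr; apply/andP; split.
  apply: ler_sum_nat => i /andP[i1 iM].
  have s0 : 0 <= s ^+ (M - i) by rewrite exprn_ge0 // ltW //; case/andP: Hs.
  rewrite [X in X <= _]mulrC -!mulrA ler_wpM2l //.
  rewrite !mulrA.
  have iM' : (1 <= i <= M)%N by rewrite i1 -ltnS.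
  have := q_le HG iM'; move=> qe.
  have /andP[q0 q1] : 0 <= q_ord R M G i <= 1.
    have hi : (i.-1 < M)%N by rewrite prednK.
    have := q_bounds M0 HG (Ordinal hi); by rewrite /= prednK.
  have := @key_ineq p (q_ord R M G i) (G%:R / M%:R) Hp.
  by rewrite q0 qe q1 => /(_ isT isT)/andP[].
apply: ler_sum_nat => i /andP[i1 iM].
have s0 : 0 <= s ^+ (M - i) by rewrite exprn_ge0 // ltW //; case/andP: Hs.
rewrite [X in _ <= X]mulrC -!mulrA ler_wpM2l //.
rewrite !mulrA.
have iM' : (1 <= i <= M)%N by rewrite i1 -ltnS.
have qe := q_le HG iM'.
have /andP[q0 q1] : 0 <= q_ord R M G i <= 1.
  have hi : (i.-1 < M)%N by rewrite prednK.
  have := q_bounds M0 HG (Ordinal hi); by rewrite /= prednK.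
have := @key_ineq p (q_ord R M G i) (G%:R / M%:R) Hp.
by rewrite q0 qe q1 => /(_ isT isT)/andP[].
Qed.


Lemma Ssum_ge0 M : 0 <= Ssum M.
Proof.
by rewrite /Ssum sumr_ge0 // => i _; rewrite exprn_ge0 // ltW //; case/andP: Hs.
Qed.

Lemma Ssum_le M : Ssum M <= (1 - s)^-1.
Proof.
have /andP[s0 s1] := Hs.
rewrite /Ssum S_closed ?lt_eqF //.
rewrite ler_pdivrMr ?subr_gt0 // mulVf ?gt_eqF ?subr_gt0 //.
by rewrite gerBl exprn_ge0 // ltW.
Qed.

Lemma part2 : (fun n => Jsum n.+1) @ \oo --> (1 - p) / ((1 - s) * p).
Proof.
have /andP[s0 s1] := Hs; have /andP[p0 p1] := Hp.
pose c := (p ^+ 2)^-1 * (1 - s)^-1.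
have c0 : 0 <= c by rewrite mulr_ge0 // invr_ge0 ?exprn_ge0 ?subr_ge0 ?ltW.
have SE : forall n, Ssum n.+1 = (1 - s ^+ n.+1) / (1 - s).
  by move=> n; rewrite /Ssum S_closed ?lt_eqF.
have ex : (fun n => s ^+ n.+1) @ \oo --> 0.
  have := @cvg_expr R s; rewrite ger0_norm ?ltW // => /(_ s1).
  by rewrite -cvg_shiftS.
have hcvg : (fun n => (1 - p) / p * Ssum n.+1) @ \oo --> (1 - p) / ((1 - s) * p).
  have -> : (1 - p) / ((1 - s) * p) = (1 - p) / p * ((1 - 0) / (1 - s)).
    by rewrite subr0; field; rewrite !gt_eqF ?subr_gt0.
  under eq_fun do rewrite SE.
  apply: cvgMl_tmp; apply: cvgMr_tmp; apply: cvgB => //; exact: cvg_cst.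
apply: (@squeeze_cvgr _ _ _ _
   (fun n => (1 - p) / p * Ssum n.+1 - G%:R / n.+1%:R * c)
   (fun n => (1 - p) / p * Ssum n.+1)); last exact: hcvg.
  near=> n; have /andP[J1 J2] := @Jbounds n.+1 (ltn0Sn n).
  rewrite J2 andbT; apply: le_trans J1; rewrite lerD2l lerN2.
  rewrite /c -mulrA ler_wpM2l ?divr_ge0 ?ler0n //.
  rewrite ler_wpM2l //; [apply: ltW; rewrite invr_gt0 exprn_gt0 // | exact: Ssum_le].
have -> : (1 - p) / ((1 - s) * p) = (1 - p) / ((1 - s) * p) - 0 * c by rewrite mul0r subr0.
apply: cvgB => //; apply: cvgMr_tmp.
have -> : (fun n => G%:R / n.+1%:R) = (fun n => G%:R * @harmonic R n) by [].
have -> : (0 : R) = G%:R * 0 by rewrite mulr0.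
by apply: cvgMl_tmp; exact: cvg_harmonic.
Unshelve. all: by end_near.
Qed.

End Lim2.
End Real.

Unset Implicit Arguments.

Theorem proposition3 (R : realType) (G : nat) (HG : (1 <= G)%N) :
  (forall (M : nat) (phi p : nat -> R),
     (1 <= M)%N ->
     (forall i : nat, (1 <= i <= M)%N -> 0 < phi i <= 1) ->
     (forall i : nat, (1 <= i <= M)%N -> 0 < p i < 1) ->
     avg_cost M G phi p @ \oo -->
       \sum_(1 <= i < M.+1)
          phi i * (1 - q_ord R M G i) * (1 - p i)
            / (1 - (1 - q_ord R M G i) * (1 - p i)))
  /\
  (forall (p sigma : R), 0 < p < 1 -> 0 < sigma < 1 ->
     (fun n : nat => J_order n.+1 G (fun i => sigma ^+ (n.+1 - i)%N) (fun _ => p))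
       @ \oo --> (1 - p) / ((1 - sigma) * p)).
Proof.
split.
  move=> M phi p M1 _ Hp.
  exact: part1 M1 HG Hp.
move=> p s Hp Hs.
have E : forall n, J_order n.+1 G (fun i => s ^+ (n.+1 - i)%N) (fun _ => p) = Jsum G p s n.+1.
  move=> n; apply: cvg_lim; first exact: Rhausdorff.
  exact: (@part1 R n.+1 G (fun i => s ^+ (n.+1 - i)%N) (fun _ => p) (ltn0Sn n) HG (fun _ _ => Hp)).
under eq_fun do rewrite E.
exact: part2.
Qed.
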